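(* Fix a realization of $h$ with $|h_i|\le h_\infty$, and let $n\ge1$, $N\ge n$, $\varepsilon(n)=2h_\infty/n$. Let $\emptyset\ne\mathbf B\subset\Gamma^n$ and $B=\rho^{-1}(\mathbf B)$. Then for every nonempty $A\subset\mathcal S\setminus B$, $$\mathbb P_{\mu_A}[\tau_B<\tau_A]\ge|\Gamma^n|^{-1}e^{-4\beta\varepsilon(n)(2N+1)}\min_{\mathbf x\in\Gamma^n\setminus\mathbf B}\frac{\boldsymbol{\mathrm{cap}}(\{\mathbf x\},\mathbf B)}{\boldsymbol\mu(\mathbf x)}.$$
   Context: Random field Curie–Weiss model: $\mathcal S=\{-1,1\}^N$; $h=(h_i)_{i\le N}$ real with $|h_i|\le h_\infty$; $H(\sigma)=-\frac1{2N}\sum_{i,j}\sigma_i\sigma_j-\sum_ih_i\sigma_i$; $\mu(\sigma)=Z^{-1}e^{-\beta H(\sigma)}2^{-N}$, $\beta\ge0$; Glauber dynamics: discrete-time chain with $p(\sigma,\sigma')=\frac1N\exp(-\beta[H(\sigma')-H(\sigma)]_+)\mathbf 1_{|\sigma-\sigma'|_1=2}$ for $\sigma'\ne\sigma$, $p(\sigma,\sigma)=1-\sum_{\sigma'\ne\sigma}p(\sigma,\sigma')$; $\mathbb P_\nu$ its law started from $\nu$, $\tau_A=\inf\{t>0:\sigma(t)\in A\}$, $\mu_A=\mu[\cdot\mid A]$. Coarse graining: disjoint intervals $I_1,\dots,I_n$ of length $\le2h_\infty/n$ with union $[-h_\infty,h_\infty]$; $\Lambda_\ell=\{i:h_i\in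 I_\ell\}$; $\rho(\sigma)=(\rho_\ell(\sigma))_{\ell\le n}$, $\rho_\ell(\sigma)=\frac1N\sum_{i\in\Lambda_\ell}\sigma_i$; $\Gamma^n=\rho(\mathcal S)$. Induced measure $\boldsymbol\mu(\mathbf x)=\mu[\rho^{-1}(\mathbf x)]$; mesoscopic rates $\mathbf r(\mathbf x,\mathbf y)=\boldsymbol\mu(\mathbf x)^{-1}\sum_{\sigma\in\rho^{-1}(\mathbf x)}\mu(\sigma)\sum_{\sigma'\in\rho^{-1}(\mathbf y)}p(\sigma,\sigma')$; mesoscopic capacity, for disjoint $\mathbf A,\mathbf B\subset\Gamma^n$: $\boldsymbol{\mathrm{cap}}(\mathbf A,\mathbf B)=\inf\{\frac12\sum_{\mathbf x,\mathbf y\in\Gamma^n}\boldsymbol\mu(\mathbf x)\mathbf r(\mathbf x,\mathbf y)(g(\mathbf x)-g(\mathbf y))^2: g:\Gamma^n\to[0,1],\ g|_{\mathbf A}=1,\ g|_{\mathbf B}=0\}$. *)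

(* Defs.v *)
From Stdlib Require Import Reals Lra ClassicalEpsilon ClassicalDescription FunctionalExtensionality List.
From mathcomp Require Import all_boot.
Set Implicit Arguments. Unset Strict Implicit. Unset Printing Implicit Defensive.
Open Scope R_scope.

Definition ind (P : Prop) : R := if excluded_middle_informative P then 1 else 0.

Definition is_lower_bound (E : R -> Prop) (m : R) : Prop := forall x, E x -> m <= x.
Definition is_glb (E : R -> Prop) (m : R) : Prop :=
  is_lower_bound E m /\ forall m', is_lower_bound E m' -> m' <= m.

(* infimum of a set of reals (0 if it does not exist) *)
Definition Rinf (E : R -> Prop) : R :=
  match excluded_middle_informative (exists m, is_glb E m) with
  | left H => proj1_sig (constructive_indefinite_description _ H)
  | right _ => 0
  end.

(* limit of a real sequence (0 if it does not converge) *)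
Definition Rlim (u : nat -> R) : R :=
  match excluded_middle_informative (exists l, Un_cv u l) with
  | left H => proj1_sig (constructive_indefinite_description _ H)
  | right _ => 0
  end.

Definition enumerates {X : Type} (E : X -> Prop) (l : list X) : Prop :=
  NoDup l /\ forall x, In x l <-> E x.
Definition flist {X : Type} (E : X -> Prop) : list X :=
  match excluded_middle_informative (exists l, enumerates E l) with
  | left H => proj1_sig (constructive_indefinite_description _ H)
  | right _ => nil
  end.
Definition card_setR {X : Type} (E : X -> Prop) : nat := length (flist E).
Definition lsum {X : Type} (l : list X) (f : X -> R) : R :=
  fold_right (fun x acc => f x + acc) 0 l.

(* sigma in {-1,1}^N encoded as a finite function 'I_N -> bool (true = +1) *)
Definition config (N : nat) := {ffun 'I_N -> bool}.
Definition spin {N : nat} (s : config N) (i : 'I_N) : R := if s i then 1 else -1.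
Definition sumI (N : nat) (F : 'I_N -> R) : R := \big[Rplus/0]_(i : 'I_N) F i.
Definition sumS (N : nat) (F : config N -> R) : R := \big[Rplus/0]_(s : config N) F s.

Definition Ham {N : nat} (h : 'I_N -> R) (s : config N) : R :=
  - (/ (2 * INR N)) * sumI (fun i => sumI (fun j => spin s i * spin s j))
  - sumI (fun i => h i * spin s i).

Definition gibbs_w {N : nat} (h : 'I_N -> R) (beta : R) (s : config N) : R :=
  exp (- beta * Ham h s) * / 2 ^ N.
Definition Zpart {N : nat} (h : 'I_N -> R) (beta : R) : R := sumS (gibbs_w h beta).
Definition mu {N : nat} (h : 'I_N -> R) (beta : R) (s : config N) : R :=
  gibbs_w h beta s / Zpart h beta.

Definition l1dist {N : nat} (s s' : config N) : R := sumI (fun i => Rabs (spin s i - spin s' i)).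

Definition poff {N : nat} (h : 'I_N -> R) (beta : R) (s s' : config N) : R :=
  ind (l1dist s s' = 2) * / INR N * exp (- beta * Rmax 0 (Ham h s' - Ham h s)).
Definition pker {N : nat} (h : 'I_N -> R) (beta : R) (s s' : config N) : R :=
  if s == s' then 1 - sumS (fun s'' => ind (s'' <> s) * poff h beta s s'')
  else poff h beta s s'.

(* hitB T s = P_s[ tau_B <= T and tau_B < tau_A ]  (tau_X = inf{t > 0 : sigma(t) in X}),
   computed by decomposing on the first step of the chain. *)
Fixpoint hitB {N : nat} (h : 'I_N -> R) (beta : R) (A B : config N -> Prop)
    (T : nat) (s : config N) : R :=
  match T with
  | O => 0
  | S T' => sumS (fun s' => pker h beta s s' *
              (ind (B s' /\ ~ A s') + ind (~ A s' /\ ~ B s') * hitB h beta A B T' s'))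
  end.

Definition muSet {N : nat} (h : 'I_N -> R) (beta : R) (A : config N -> Prop) : R :=
  sumS (fun s => ind (A s) * mu h beta s).

(* P_{mu_A}[tau_B < tau_A] *)
Definition hitprob {N : nat} (h : 'I_N -> R) (beta : R) (A B : config N -> Prop) : R :=
  Rlim (fun T => sumS (fun s => ind (A s) * (mu h beta s / muSet h beta A) * hitB h beta A B T s)).

(* lab i = the index l with h_i in I_l, i.e. i in Lambda_l *)
Definition rho {N n : nat} (lab : 'I_N -> 'I_n) (s : config N) : 'I_n -> R :=
  fun l => / INR N * sumI (fun i => (if lab i == l then 1 else 0) * spin s i).

Definition Gamma {N n : nat} (lab : 'I_N -> 'I_n) (x : 'I_n -> R) : Prop :=
  exists s : config N, rho lab s = x.

Definition mum {N n : nat} (h : 'I_N -> R) (beta : R) (lab : 'I_N -> 'I_n)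
    (x : 'I_n -> R) : R :=
  sumS (fun s => ind (rho lab s = x) * mu h beta s).

Definition rm {N n : nat} (h : 'I_N -> R) (beta : R) (lab : 'I_N -> 'I_n)
    (x y : 'I_n -> R) : R :=
  / mum h beta lab x *
  sumS (fun s => ind (rho lab s = x) * mu h beta s *
          sumS (fun s' => ind (rho lab s' = y) * pker h beta s s')).

Definition dirichlet {N n : nat} (h : 'I_N -> R) (beta : R) (lab : 'I_N -> 'I_n)
    (g : ('I_n -> R) -> R) : R :=
  / 2 * lsum (flist (Gamma lab)) (fun x => lsum (flist (Gamma lab)) (fun y =>
          mum h beta lab x * rm h beta lab x y * (g x - g y) ^ 2)).

Definition mcap {N n : nat} (h : 'I_N -> R) (beta : R) (lab : 'I_N -> 'I_n)
    (Am Bm : ('I_n -> R) -> Prop) : R :=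
  Rinf (fun v => exists g : ('I_n -> R) -> R,
          (forall x, Gamma lab x -> 0 <= g x <= 1) /\
          (forall x, Gamma lab x -> Am x -> g x = 1) /\
          (forall x, Gamma lab x -> Bm x -> g x = 0) /\
          v = dirichlet h beta lab g).

(* Main.v *)
Require Import Defs.
From Stdlib Require Import Reals Lra Lia ClassicalEpsilon ClassicalDescription FunctionalExtensionality List.
From HB Require Import structures.
From mathcomp Require Import all_boot all_fingroup.
Import Defs.
Set Implicit Arguments. Unset Strict Implicit. Unset Printing Implicit Defensive.
Open Scope R_scope.

Lemma Rplus_A : associative Rplus. Proof. move=> *; ring. Qed.
Lemma Rmult_A : associative Rmult. Proof. move=> *; ring. Qed.
HB.instance Definition _ := Monoid.isComLaw.Build R 0 Rplus Rplus_A Rplus_comm Rplus_0_l.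
HB.instance Definition _ := Monoid.isComLaw.Build R 1 Rmult Rmult_A Rmult_comm Rmult_1_l.
Lemma Rmult_0_l' : left_zero 0 Rmult. Proof. move=> x; ring. Qed.
Lemma Rmult_0_r' : right_zero 0 Rmult. Proof. move=> x; ring. Qed.
HB.instance Definition _ := Monoid.isMulLaw.Build R 0 Rmult Rmult_0_l' Rmult_0_r'.
Lemma Rdl : left_distributive Rmult Rplus. Proof. move=> x y z; ring. Qed.
Lemma Rdr : right_distributive Rmult Rplus. Proof. move=> x y z; ring. Qed.
HB.instance Definition _ := Monoid.isAddLaw.Build R Rmult Rplus Rdl Rdr.

Section Sums.
Variable I : finType.
Implicit Types F G : I -> R.
Notation S F := (\big[Rplus/0]_(i : I) F i).

Lemma sum_le F G : (forall i, F i <= G i) -> S F <= S G.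
Proof. move=> H; elim/big_ind2: _ => //; [lra| move=> *; lra]. Qed.
Lemma sum_ge0 F : (forall i, 0 <= F i) -> 0 <= S F.
Proof. move=> H; elim/big_ind: _ => //; [lra| move=> *; lra]. Qed.
Lemma sum_add F G : S (fun i => F i + G i) = S F + S G.
Proof. by rewrite big_split. Qed.
Lemma sum_scal c F : S (fun i => c * F i) = c * S F.
Proof. by rewrite big_distrr. Qed.
Lemma sum_scalr c F : S (fun i => F i * c) = S F * c.
Proof. by rewrite big_distrl. Qed.
Lemma sum_ext F G : (forall i, F i = G i) -> S F = S G.
Proof. by move=> H; apply: eq_bigr. Qed.
Lemma sum_0 : S (fun _ => 0) = 0.
Proof. by rewrite big1. Qed.
Lemma sum_opp F : S (fun i => - F i) = - S F.
Proof. have -> : - S F = -1 * S F by ring. rewrite -sum_scal. apply: sum_ext => i; ring. Qed.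
Lemma sum_sub F G : S (fun i => F i - G i) = S F - S G.
Proof. rewrite /Rminus -sum_opp -sum_add. done. Qed.
Lemma sum_point F (a : I) : (forall i, i != a -> F i = 0) -> S F = F a.
Proof. move=> H; rewrite (bigD1 a) //= big1 ?Rplus_0_r // => i /H //. Qed.
Lemma sum_ge_term F (a : I) : (forall i, 0 <= F i) -> F a <= S F.
Proof. move=> H; rewrite (bigD1 a) //=. have : 0 <= \big[Rplus/0]_(i | i != a) F i.
  elim/big_ind: _ => //; [lra|move=> *;lra]. lra. Qed.
Lemma sum_reindex (f : I -> I) F : injective f -> S F = S (fun i => F (f i)).
Proof. move=> inj; by rewrite (reindex_inj inj). Qed.
End Sums.

Lemma sum_exchange (I J : finType) (F : I -> J -> R) :
  \big[Rplus/0]_(i : I) \big[Rplus/0]_(j : J) F i j = \big[Rplus/0]_(j : J) \big[Rplus/0]_(i : I) F i j.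
Proof. exact: exchange_big. Qed.

Lemma exp_le' x y : x <= y -> exp x <= exp y.
Proof. move=> [H|->]; [left; apply: exp_increasing|right]; done. Qed.

Lemma ind_T (P : Prop) : P -> ind P = 1.
Proof. move=> HP; rewrite /ind; destruct (excluded_middle_informative P); [reflexivity|contradiction]. Qed.
Lemma ind_F (P : Prop) : ~ P -> ind P = 0.
Proof. move=> HP; rewrite /ind; destruct (excluded_middle_informative P); [contradiction|reflexivity]. Qed.
Lemma ind_01 (P : Prop) : 0 <= ind P <= 1.
Proof. rewrite /ind; destruct (excluded_middle_informative P); simpl; lra. Qed.
Lemma ind_ext (P Q : Prop) : (P <-> Q) -> ind P = ind Q.
Proof. move=> H; rewrite /ind. destruct (excluded_middle_informative P); destruct (excluded_middle_informative Q); simpl; try reflexivity; exfalso; tauto. Qed.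

Lemma sum_const_ord (N : nat) (c : R) : \big[Rplus/0]_(i : 'I_N) c = INR N * c.
Proof. rewrite big_const_ord. elim: N => [|k IH]; first (simpl; ring). rewrite S_INR /= IH; ring. Qed.

Lemma sum_ge_two (I : finType) (F : I -> R) (a b : I) : a != b -> (forall i, 0 <= F i) ->
  F a + F b <= \big[Rplus/0]_i F i.
Proof. move=> ab H. rewrite (bigD1 a) //= (bigD1 b) /=; last by rewrite eq_sym.
  have : 0 <= \big[Rplus/0]_(i | (i != a) && (i != b)) F i.
  elim/big_ind: _ => //; [lra|move=> *;lra]. lra. Qed.

Definition flip {N} (s : config N) (i : 'I_N) : config N := [ffun k => if k == i then ~~ s k else s k].

Lemma spin_diff {N} (s s' : config N) i : Rabs (spin s i - spin s' i) = if s i == s' i then 0 else 2.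
Proof. rewrite /spin; case: (s i); case: (s' i) => /=; rewrite ?Rminus_diag ?Rabs_R0 //;
  rewrite /Rabs; case: Rcase_abs; lra. Qed.

Lemma l1dist_flip {N} (s s' : config N) : l1dist s s' = 2 -> exists i, s' = flip s i.
Proof.
  rewrite /l1dist /sumI => H.
  case: (pickP (fun i => s i != s' i)) => [i Hi|Hn]; last first.
  { exfalso. rewrite big1 in H; first lra. move=> i _; rewrite spin_diff. by move: (Hn i) => /= /negbFE ->. }
  exists i. apply/ffunP => j. rewrite ffunE. case: (eqVneq j i) => [->|ji].
  - by move: Hi; case: (s i); case: (s' i).
  - apply/eqP; apply: contraT => Hj. exfalso.
    have := @sum_ge_two _ (fun k => Rabs (spin s k - spin s' k)) i j.
    rewrite eq_sym ji => /(_ isT (fun k => Rabs_pos _)). rewrite !spin_diff.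
    rewrite (negbTE Hi). rewrite eq_sym in Hj. rewrite (negbTE Hj). move=> H2; have : 2 + 2 <= 2 by apply: Rle_trans H2 (Req_le _ _ H). lra.
Qed.

Lemma l1dist_sym {N} (s s' : config N) : l1dist s s' = l1dist s' s.
Proof. rewrite /l1dist /sumI; apply: sum_ext => i. rewrite -Rabs_Ropp; f_equal; ring. Qed.

Lemma l1dist_self {N} (s : config N) : l1dist s s = 0.
Proof. rewrite /l1dist /sumI big1 // => i _; rewrite Rminus_diag Rabs_R0 //. Qed.

Section Chain.
Variables (N : nat) (h : 'I_N -> R) (beta : R).
Hypothesis N0 : (0 < N)%N.
Hypothesis beta0 : 0 <= beta.
Implicit Types s : config N.

Lemma INR_N_pos : 0 < INR N.
Proof. apply: lt_0_INR. by apply/ltP. Qed.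

Lemma poff_ge0 s s' : 0 <= poff h beta s s'.
Proof. rewrite /poff. have := ind_01 (l1dist s s' = 2). have := INR_N_pos. have := exp_pos (- beta * Rmax 0 (Ham h s' - Ham h s)).
  move=> *. apply: Rmult_le_pos; last lra. apply: Rmult_le_pos; first lra. left; apply: Rinv_0_lt_compat; lra. Qed.

Lemma poff_le s s' : poff h beta s s' <= ind (l1dist s s' = 2) * / INR N.
Proof. rewrite /poff. have H1 := ind_01 (l1dist s s' = 2). have := INR_N_pos => HN.
  have HI : 0 < / INR N by apply: Rinv_0_lt_compat.
  have : exp (- beta * Rmax 0 (Ham h s' - Ham h s)) <= 1.
  { rewrite -exp_0. apply: exp_le'. have : 0 <= Rmax 0 (Ham h s' - Ham h s) by apply: Rmax_l.
    move=> ?. nra. }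
  move=> ?. have : 0 <= ind (l1dist s s' = 2) * / INR N by nra. nra. Qed.

Lemma sum_nbr s : sumS (fun s'' => ind (l1dist s s'' = 2)) <= INR N.
Proof.
  apply: Rle_trans (_ : sumS (fun s'' => sumI (fun i => ind (s'' = flip s i))) <= _).
  { apply: sum_le => s''. case: (excluded_middle_informative (l1dist s s'' = 2)) => Hd.
    - rewrite ind_T //. case: (l1dist_flip Hd) => i Hi. rewrite /sumI.
      have := @sum_ge_term _ (fun i => ind (s'' = flip s i)) i (fun _ => proj1 (ind_01 _)).
      rewrite ind_T //.
    - rewrite ind_F //. rewrite /sumI; apply: sum_ge0 => i; apply ind_01. }
  rewrite /sumS /sumI sum_exchange. rewrite (@sum_ext _ _ (fun _ => 1)).
  - rewrite sum_const_ord; lra.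
  - move=> i. rewrite (@sum_point _ _ (flip s i)). by rewrite ind_T.
    move=> s'' /eqP Hs. by rewrite ind_F.
Qed.

Lemma sum_off_le s : sumS (fun s'' => ind (s'' <> s) * poff h beta s s'') <= 1.
Proof.
  apply: Rle_trans (_ : sumS (fun s'' => ind (l1dist s s'' = 2) * / INR N) <= _).
  { apply: sum_le => s''. have := poff_le s s''. have := poff_ge0 s s''. have := ind_01 (s'' <> s).
    move=> [H1 H2] H3 H4. apply: Rle_trans H4. rewrite -{2}(Rmult_1_l (poff h beta s s'')). by apply: Rmult_le_compat_r. }
  rewrite /sumS sum_scalr. have := sum_nbr s. rewrite /sumS. have := INR_N_pos => HN.
  move=> H. apply: Rle_trans (_ : INR N * / INR N <= _). apply: Rmult_le_compat_r => //.
  left; apply: Rinv_0_lt_compat; lra. rewrite Rinv_r; lra. Qed.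

Lemma pker_ge0 s s' : 0 <= pker h beta s s'.
Proof. rewrite /pker; case: eqP => _; [have := sum_off_le s; lra| apply: poff_ge0]. Qed.

Lemma pker_sum s : sumS (fun s' => pker h beta s s') = 1.
Proof.
  rewrite /sumS (bigD1 s) //= /pker eqxx.
  rewrite (@eq_bigr _ _ _ _ _ _ _ (fun s' => ind (s' <> s) * poff h beta s s')); last first.
  { move=> s' Hs. rewrite /pker eq_sym (negbTE Hs) ind_T; [ring | by move/eqP: Hs]. }
  rewrite /sumS [X in _ - X](bigD1 s) //= ind_F // Rmult_0_l Rplus_0_l. rewrite /Rminus Rplus_assoc Rplus_opp_l Rplus_0_r //. Qed.

Lemma Rmax_shift a b : a + Rmax 0 (b - a) = Rmax a b.
Proof. unfold Rmax; destruct (Rle_dec 0 (b-a)); destruct (Rle_dec a b); lra. Qed.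

Lemma mu_poff s s' : gibbs_w h beta s * poff h beta s s' =
   ind (l1dist s s' = 2) * / INR N * (exp (- beta * Rmax (Ham h s) (Ham h s')) * / 2 ^ N).
Proof. rewrite /gibbs_w /poff -[Rmax (Ham h s) _]Rmax_shift Rmult_plus_distr_l exp_plus. ring. Qed.

Lemma Rmax_comm' a b : Rmax a b = Rmax b a.
Proof. unfold Rmax; destruct (Rle_dec a b); destruct (Rle_dec b a); lra. Qed.

Lemma revw s s' : gibbs_w h beta s * pker h beta s s' = gibbs_w h beta s' * pker h beta s' s.
Proof. rewrite /pker. case: (eqVneq s s') => [->//|ne].
  rewrite !mu_poff l1dist_sym Rmax_comm'. done. Qed.

Lemma gibbs_pos s : 0 < gibbs_w h beta s.
Proof. rewrite /gibbs_w. apply: Rmult_lt_0_compat; first apply: exp_pos. apply: Rinv_0_lt_compat; apply: pow_lt; lra. Qed.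

Lemma Z_pos : 0 < Zpart h beta.
Proof. rewrite /Zpart /sumS. have := @sum_ge_term _ (gibbs_w h beta) [ffun=> true] (fun s => Rlt_le _ _ (gibbs_pos s)).
  move=> H. exact: Rlt_le_trans (gibbs_pos _) H. Qed.

Lemma mu_pos s : 0 < mu h beta s.
Proof. rewrite /mu /Rdiv; apply: Rmult_lt_0_compat; [apply: gibbs_pos| apply: Rinv_0_lt_compat; apply: Z_pos]. Qed.

Lemma rev s s' : mu h beta s * pker h beta s s' = mu h beta s' * pker h beta s' s.
Proof. rewrite /mu /Rdiv. have := revw s s'. move=> H. 
  transitivity (gibbs_w h beta s * pker h beta s s' * / Zpart h beta); first ring. rewrite H; ring. Qed.

End Chain.

Lemma cv_const (c : R) : Un_cv (fun _ => c) c.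
Proof. move=> e He; exists 0%nat => n _; rewrite /R_dist Rminus_diag Rabs_R0 //. Qed.

Lemma cv_shift u l : Un_cv u l -> Un_cv (fun n => u (S n)) l.
Proof. move=> H e He; case: (H e He) => M HM; exists M => n Hn; apply: HM; lia. Qed.

Lemma Rlim_spec u l : Un_cv u l -> Rlim u = l.
Proof. move=> H; rewrite /Rlim; case: excluded_middle_informative => [E|E]; last by (exfalso; apply: E; exists l).
  case: (constructive_indefinite_description _ E) => l' Hl' /=. exact: UL_sequence Hl' H. Qed.

Lemma cv_sum (I : finType) (u : I -> nat -> R) (l : I -> R) : (forall i, Un_cv (u i) (l i)) ->
  Un_cv (fun T => \big[Rplus/0]_(i : I) u i T) (\big[Rplus/0]_(i : I) l i).
Proof. move=> H. elim: (index_enum I) => [|i r IH].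
  - rewrite big_nil. apply: (Un_cv_ext (fun _ => 0)); last exact: cv_const. move=> T; by rewrite big_nil.
  - rewrite big_cons. apply: (Un_cv_ext (fun T => u i T + \big[Rplus/0]_(j <- r) u j T)).
    move=> T; by rewrite big_cons. exact: CV_plus.
Qed.

Section Hit.
Variables (N : nat) (h : 'I_N -> R) (beta : R).
Hypothesis N0 : (0 < N)%N.
Hypothesis beta0 : 0 <= beta.
Variables (A B : config N -> Prop).
Hypothesis AB : forall s, A s -> ~ B s.
Implicit Types s : config N.

Definition wgt s := ind (B s /\ ~ A s) + ind (~ A s /\ ~ B s).

Lemma ind_sum01 s x : 0 <= x <= 1 -> 0 <= ind (B s /\ ~ A s) + ind (~ A s /\ ~ B s) * x <= 1.
Proof. move=> Hx. case: (classic (A s)) => Ha.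
  - rewrite !ind_F; try tauto. lra.
  - case: (classic (B s)) => Hb.
    + rewrite ind_T ?ind_F; try tauto. lra.
    + rewrite ind_F ?ind_T; try tauto. lra.
Qed.

Lemma sum_convex s (f : config N -> R) : (forall s', 0 <= f s' <= 1) ->
   0 <= sumS (fun s' => pker h beta s s' * f s') <= 1.
Proof. move=> Hf. split.
  - apply: sum_ge0 => s'. apply: Rmult_le_pos; [exact: pker_ge0| apply Hf].
  - rewrite -(pker_sum h beta s). apply: sum_le => s'. have := pker_ge0 h N0 beta0 s s'.
    have := Hf s'. nra.
Qed.

Lemma hitB_01 T s : 0 <= hitB h beta A B T s <= 1.
Proof. elim: T s => [|T IH] s /=; first lra. apply: sum_convex => s'. exact: ind_sum01. Qed.

Lemma hitB_S T s : hitB h beta A B (S T) s = sumS (fun s' => pker h beta s s' *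
              (ind (B s' /\ ~ A s') + ind (~ A s' /\ ~ B s') * hitB h beta A B T s')).
Proof. by []. Qed.

Lemma hitB_mono T s : hitB h beta A B T s <= hitB h beta A B (S T) s.
Proof. elim: T s => [|T IH] s.
  - by case: (hitB_01 1 s).
  - rewrite hitB_S [hitB _ _ _ _ (S (S T)) s]hitB_S. apply: sum_le => s'.
    apply: Rmult_le_compat_l; first exact: pker_ge0. have := ind_01 (~ A s' /\ ~ B s'). have := IH s'. nra.
Qed.

Definition esc s := Rlim (fun T => hitB h beta A B T s).

Lemma esc_cv s : Un_cv (fun T => hitB h beta A B T s) (esc s).
Proof. have [l Hl] : {l | Un_cv (fun T => hitB h beta A B T s) l}.
  { apply: growing_cv. move=> T; exact: hitB_mono. exists 1 => x [T ->]. exact: (proj2 (hitB_01 T s)). }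
  by rewrite /esc (Rlim_spec Hl). Qed.

Lemma esc_01 s : 0 <= esc s <= 1.
Proof. have H := esc_cv s. split.
  - apply: Rnot_lt_le => Hlt. case: (H (- esc s)) => [|M HM]; first lra. have := HM M (le_n _).
    have := hitB_01 M s. rewrite /R_dist /Rabs; case: Rcase_abs; lra.
  - apply: Rnot_lt_le => Hlt. case: (H (esc s - 1)) => [|M HM]; first lra. have := HM M (le_n _).
    have := hitB_01 M s. rewrite /R_dist /Rabs; case: Rcase_abs; lra.
Qed.

Definition uf s := ind (B s /\ ~ A s) + ind (~ A s /\ ~ B s) * esc s.

Lemma esc_eq s : esc s = sumS (fun s' => pker h beta s s' * uf s').
Proof. apply: UL_sequence (cv_shift (esc_cv s)) _. rewrite /sumS.
  apply: cv_sum => s'. apply: CV_mult; first exact: cv_const.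
  apply: CV_plus; first exact: cv_const. apply: CV_mult; [exact: cv_const| exact: esc_cv]. Qed.

End Hit.

Section Dir.
Variables (N : nat) (h : 'I_N -> R) (beta : R).
Hypothesis N0 : (0 < N)%N.
Hypothesis beta0 : 0 <= beta.
Implicit Types s : config N.
Implicit Types f g v : config N -> R.

Definition Pf f s := sumS (fun s' => pker h beta s s' * f s').

Definition Dir f := / 2 * sumS (fun s => sumS (fun s' => mu h beta s * pker h beta s s' * (f s - f s') ^ 2)).

Lemma Dir_ge0 f : 0 <= Dir f.
Proof. rewrite /Dir. apply: Rmult_le_pos; first lra. apply: sum_ge0 => s; apply: sum_ge0 => s'.
  apply: Rmult_le_pos; last by (apply: pow2_ge_0).
  apply: Rmult_le_pos; [left; exact: mu_pos| exact: pker_ge0]. Qed.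

Definition cross f g := sumS (fun s => sumS (fun s' => mu h beta s * pker h beta s s' * ((f s - f s') * (g s - g s')))).

Lemma cross_eq f g : cross f g = 2 * sumS (fun s => mu h beta s * g s * (f s - Pf f s)).
Proof.
  have E1 : cross f g = sumS (fun s => sumS (fun s' => mu h beta s * pker h beta s s' * (f s - f s') * g s))
       - sumS (fun s => sumS (fun s' => mu h beta s * pker h beta s s' * (f s - f s') * g s')).
  { rewrite /cross /sumS -sum_sub. apply: sum_ext => s. rewrite -sum_sub. apply: sum_ext => s'. ring. }
  have E2 : sumS (fun s => sumS (fun s' => mu h beta s * pker h beta s s' * (f s - f s') * g s'))
      = - sumS (fun s => sumS (fun s' => mu h beta s * pker h beta s s' * (f s - f s') * g s)).
  { rewrite /sumS sum_exchange -sum_opp. apply: sum_ext => s. rewrite -sum_opp. apply: sum_ext => s'.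
    rewrite (rev h beta s' s). ring. }
  have E3 : forall s, sumS (fun s' => mu h beta s * pker h beta s s' * (f s - f s') * g s)
           = mu h beta s * g s * (f s - Pf f s).
  { move=> s. rewrite /Pf. have : sumS (fun s' => pker h beta s s' * f s) = f s.
      by rewrite /sumS sum_scalr -/(sumS _) pker_sum Rmult_1_l.
    move=> Hs. rewrite -{2}Hs /sumS -sum_sub -sum_scal. apply: sum_ext => s'. ring. }
  rewrite E1 E2. rewrite /sumS (sum_ext (E3 : forall s, _ = _)). rewrite -/(sumS _). ring.
Qed.

Lemma Dir_add f g : Dir (fun s => f s + g s) = Dir f + Dir g + / 2 * (2 * cross f g).
Proof. rewrite /Dir /cross /sumS. have -> : forall a b c, / 2 * a + / 2 * b + / 2 * (2 * c) = / 2 * (a + b + 2 * c) by move=> *; field.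
  congr (_ * _). rewrite -sum_scal -!sum_add. apply: sum_ext => s. rewrite -sum_scal -!sum_add. apply: sum_ext => s'. ring. Qed.

Lemma Dir_v v : Dir v = sumS (fun s => mu h beta s * v s * (v s - Pf v s)).
Proof. have : Dir v = / 2 * cross v v. { rewrite /Dir /cross. f_equal. apply: sum_ext => s. apply: sum_ext => s'. ring. }
  rewrite cross_eq => ->. field. Qed.

Lemma DP v f : (forall s, f s <> v s -> v s = Pf v s) -> Dir v <= Dir f.
Proof. move=> H. have -> : f = fun s => v s + (f s - v s) by apply: functional_extensionality => s; ring.
  rewrite Dir_add cross_eq. have -> : sumS (fun s => mu h beta s * (f s - v s) * (v s - Pf v s)) = 0.
  { rewrite /sumS big1 // => s _. case: (Req_dec (f s) (v s)) => [->|ne]; first ring. rewrite -H //. ring. }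
  have := Dir_ge0 (fun s => f s - v s). lra. Qed.

End Dir.

Section Cap.
Variables (N : nat) (h : 'I_N -> R) (beta : R).
Hypothesis N0 : (0 < N)%N.
Hypothesis beta0 : 0 <= beta.
Variables (A B : config N -> Prop).
Hypothesis AB : forall s, A s -> ~ B s.
Implicit Types s : config N.

Definition vpot s := 1 - uf h beta A B s.

Lemma Pf_vpot s : Pf h beta vpot s = 1 - esc h beta A B s.
Proof. rewrite /Pf /vpot (esc_eq h N0 beta0 A B s).
  have -> : sumS (fun s' => pker h beta s s' * (1 - uf h beta A B s')) = sumS (fun s' => pker h beta s s') - sumS (fun s' => pker h beta s s' * uf h beta A B s').
  { rewrite /sumS -sum_sub; apply: sum_ext => s'; ring. }
  by rewrite pker_sum. Qed.

Lemma vpot_A s : A s -> vpot s = 1.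
Proof. move=> Ha. rewrite /vpot /uf !ind_F; try tauto. ring. Qed.
Lemma vpot_B s : B s -> vpot s = 0.
Proof. move=> Hb. have Ha : ~ A s by move=> /AB. rewrite /vpot /uf ind_T ?ind_F; try tauto. ring. Qed.
Lemma vpot_C s : ~ A s -> ~ B s -> vpot s = Pf h beta vpot s.
Proof. move=> Ha Hb. rewrite Pf_vpot /vpot /uf ind_F ?ind_T; try tauto. ring. Qed.

Lemma vpot_01 s : 0 <= vpot s <= 1.
Proof. rewrite /vpot /uf. have := ind_sum01 A B s (esc_01 h N0 beta0 A B s). lra. Qed.

Definition capc := Dir h beta vpot.

Lemma capc_eq : capc = sumS (fun s => ind (A s) * mu h beta s * esc h beta A B s).
Proof. rewrite /capc Dir_v //. apply: sum_ext => s. case: (classic (A s)) => Ha.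
  - rewrite ind_T // Pf_vpot vpot_A //. ring.
  - rewrite ind_F //. case: (classic (B s)) => Hb.
    + rewrite vpot_B //. ring.
    + rewrite -vpot_C //. ring.
Qed.

Lemma capc_min f : (forall s, A s -> f s = 1) -> (forall s, B s -> f s = 0) -> capc <= Dir h beta f.
Proof. move=> HA HB. apply: DP => // s ne. case: (classic (A s)) => Ha.
  - exfalso; apply: ne; rewrite HA // vpot_A //.
  - case: (classic (B s)) => Hb.
    + exfalso; apply: ne; rewrite HB // vpot_B //.
    + exact: vpot_C.
Qed.

Lemma hitprob_eq : 0 < muSet h beta A -> hitprob h beta A B = capc / muSet h beta A.
Proof. move=> Hm. rewrite /hitprob. apply: Rlim_spec. rewrite capc_eq /Rdiv /sumS -sum_scalr.
  apply: cv_sum => s. apply: (Un_cv_ext (fun T => ind (A s) * (mu h beta s / muSet h beta A) * hitB h beta A B T s)) => //.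
  have -> : ind (A s) * mu h beta s * esc h beta A B s * / muSet h beta A = ind (A s) * (mu h beta s / muSet h beta A) * esc h beta A B s.
    rewrite /Rdiv; ring.
  apply: CV_mult; [exact: cv_const| exact: esc_cv]. Qed.

End Cap.

Lemma hitB_anti N (h : 'I_N -> R) beta (N0 : (0 < N)%N) (beta0 : 0 <= beta) (A A' B : config N -> Prop) :
  (forall s, A' s -> A s) -> (forall s, A s -> ~ B s) -> forall T s,
  hitB h beta A B T s <= hitB h beta A' B T s.
Proof. move=> sub AB. elim=> [|T IH] s; first (simpl; lra).
  rewrite !hitB_S. apply: sum_le => s'. apply: Rmult_le_compat_l; first exact: pker_ge0.
  case: (classic (B s')) => Hb.
  - have nA : ~ A s' by move=> /AB. have nA' : ~ A' s' by move=> /sub.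
    rewrite (ind_T (P := B s' /\ ~ A s')) // (ind_T (P := B s' /\ ~ A' s')) //.
    rewrite (ind_F (P := ~ A s' /\ _)); try tauto. rewrite (ind_F (P := ~ A' s' /\ _)); try tauto. lra.
  - rewrite (ind_F (P := B s' /\ _)); try tauto. rewrite (ind_F (P := B s' /\ _)); try tauto.
    case: (classic (A s')) => Ha.
    + rewrite (ind_F (P := ~ A s' /\ _)); try tauto. have := ind_01 (~ A' s' /\ ~ B s').
      have := hitB_01 h N0 beta0 A' B T s'. move=> *. 
      have : forall c, 0 <= c -> 0 <= c. done. nra.
    + rewrite !ind_T; try (split; try done; move=> /sub; tauto). have := IH s'. lra.
Qed.

Section Comp.
Variables (N : nat) (h h' : 'I_N -> R) (beta eps : R).
Hypothesis N0 : (0 < N)%N.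
Hypothesis beta0 : 0 <= beta.
Hypothesis hh : forall i, Rabs (h i - h' i) <= eps.
Implicit Types s : config N.

Definition dlt := beta * (INR N * eps).

Lemma eps0 : 0 <= eps.
Proof. have i : 'I_N by exists 0%N. have := hh i. have := Rabs_pos (h i - h' i). lra. Qed.
Lemma dlt0 : 0 <= dlt.
Proof. rewrite /dlt. apply: Rmult_le_pos => //. apply: Rmult_le_pos; [apply: pos_INR| exact: eps0]. Qed.

Lemma Ham_diff s : Rabs (Ham h s - Ham h' s) <= INR N * eps.
Proof.
  have E : Ham h s - Ham h' s = - sumI (fun i => (h i - h' i) * spin s i).
  { rewrite /Ham /sumI.
    have -> : \big[Rplus/0]_(i : 'I_N) ((h i - h' i) * spin s i) = \big[Rplus/0]_(i : 'I_N) (h i * spin s i) - \big[Rplus/0]_(i : 'I_N) (h' i * spin s i)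
      by rewrite -sum_sub; apply: sum_ext => i; ring. ring. }
  have Hb : forall i, - eps <= (h i - h' i) * spin s i <= eps.
  { move=> i. have := hh i. rewrite /spin. case: (s i); rewrite /Rabs; case: Rcase_abs; lra. }
  have L : sumI (fun i => (h i - h' i) * spin s i) <= INR N * eps.
  { rewrite -sum_const_ord /sumI. apply: sum_le => i. exact: (proj2 (Hb i)). }
  have U : - (INR N * eps) <= sumI (fun i => (h i - h' i) * spin s i).
  { have -> : - (INR N * eps) = INR N * - eps by ring. rewrite -sum_const_ord /sumI. apply: sum_le => i. exact: (proj1 (Hb i)). }
  rewrite E Rabs_Ropp /Rabs; case: Rcase_abs; lra.
Qed.

Lemma exp_cmp x x' : x <= x' + INR N * eps -> exp (- dlt) * exp (- beta * x') <= exp (- beta * x).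
Proof. move=> H. rewrite -exp_plus. apply: exp_le'. rewrite /dlt.
  have := Rmult_le_compat_l _ _ _ beta0 H. lra. Qed.

Lemma gibbs_le s : gibbs_w h beta s <= exp dlt * gibbs_w h' beta s.
Proof. rewrite /gibbs_w -Rmult_assoc. apply: Rmult_le_compat_r.
  left; apply: Rinv_0_lt_compat; apply: pow_lt; lra.
  rewrite -exp_plus. apply: exp_le'. have Hx : Ham h' s - Ham h s <= INR N * eps.
  { have := Ham_diff s. rewrite /Rabs; case: Rcase_abs; lra. }
  have := Rmult_le_compat_l _ _ _ beta0 Hx. rewrite /dlt. lra. Qed.

Lemma Z_le : Zpart h beta <= exp dlt * Zpart h' beta.
Proof. rewrite /Zpart /sumS -sum_scal. apply: sum_le => s. exact: gibbs_le. Qed.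

End Comp.

Lemma Rabs_sym_le (h h' : R) e : Rabs (h - h') <= e -> Rabs (h' - h) <= e.
Proof. by rewrite -Rabs_Ropp Ropp_minus_distr. Qed.

Section Comp2.
Variables (N : nat) (h h' : 'I_N -> R) (beta eps : R).
Hypothesis N0 : (0 < N)%N.
Hypothesis beta0 : 0 <= beta.
Hypothesis hh : forall i, Rabs (h i - h' i) <= eps.
Implicit Types s : config N.
Let hh' : forall i, Rabs (h' i - h i) <= eps. Proof. move=> i; apply: Rabs_sym_le; exact: hh. Qed.

Lemma dlt_sym : dlt N beta eps = dlt N beta eps. Proof. done. Qed.

Lemma mu_le s : mu h beta s <= exp (2 * dlt N beta eps) * mu h' beta s.
Proof.
  have Z1 := Z_le beta0 hh'. have Z2 := Z_pos h beta. have Z3 := Z_pos h' beta.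
  have G := gibbs_le beta0 hh s. have Gp := gibbs_pos h' beta s.
  rewrite /mu /Rdiv. have -> : 2 * dlt N beta eps = dlt N beta eps + dlt N beta eps by ring. rewrite exp_plus.
  have e1 := exp_pos (dlt N beta eps).
  apply: Rle_trans (_ : exp (dlt N beta eps) * gibbs_w h' beta s * / Zpart h beta <= _).
  { apply: Rmult_le_compat_r; [left; apply: Rinv_0_lt_compat; lra| exact: G]. }
  have : / Zpart h beta <= exp (dlt N beta eps) * / Zpart h' beta.
  { apply: (Rmult_le_reg_l (Zpart h beta)) => //. rewrite Rinv_r; last lra.
    apply: (Rmult_le_reg_l (Zpart h' beta)) => //. 
    have -> : Zpart h' beta * (Zpart h beta * (exp (dlt N beta eps) * / Zpart h' beta)) = Zpart h beta * exp (dlt N beta eps)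
      by field; lra. lra. }
  move=> H. have : 0 <= exp (dlt N beta eps) * gibbs_w h' beta s by nra. nra.
Qed.

Lemma Rmax_le_shift a b a' b' d : a <= a' + d -> b <= b' + d -> Rmax a b <= Rmax a' b' + d.
Proof. unfold Rmax; destruct (Rle_dec a b); destruct (Rle_dec a' b'); lra. Qed.

Lemma cond_ge s s' : s != s' -> exp (- (2 * dlt N beta eps)) * (mu h' beta s * pker h' beta s s') <= mu h beta s * pker h beta s s'.
Proof.
  move=> ne. rewrite /pker (negbTE ne) /mu /Rdiv.
  have M : forall (hx : 'I_N -> R), gibbs_w hx beta s * / Zpart hx beta * poff hx beta s s' =
      ind (l1dist s s' = 2) * / INR N * / 2 ^ N * (exp (- beta * Rmax (Ham hx s) (Ham hx s')) * / Zpart hx beta).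
  { move=> hx. have := mu_poff hx beta s s'. move=> E. 
    transitivity (gibbs_w hx beta s * poff hx beta s s' * / Zpart hx beta); first ring. rewrite E. ring. }
  rewrite !M.
  have K : 0 <= ind (l1dist s s' = 2) * / INR N * / 2 ^ N.
  { have := ind_01 (l1dist s s' = 2). have := INR_N_pos N0. move=> HN Hi.
    apply: Rmult_le_pos; [apply: Rmult_le_pos; [lra| left; apply: Rinv_0_lt_compat; lra]|].
    left; apply: Rinv_0_lt_compat; apply: pow_lt; lra. }
  set c := ind (l1dist s s' = 2) * / INR N * / 2 ^ N in K *.
  have X1 : exp (- dlt N beta eps) * exp (- beta * Rmax (Ham h' s) (Ham h' s')) <= exp (- beta * Rmax (Ham h s) (Ham h s')).
  { apply: (exp_cmp beta0). apply: Rmax_le_shift.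
    - have := Ham_diff hh s. rewrite /Rabs; case: Rcase_abs; lra.
    - have := Ham_diff hh s'. rewrite /Rabs; case: Rcase_abs; lra. }
  have Z1 := Z_le beta0 hh. have Z2 := Z_pos h beta. have Z3 := Z_pos h' beta.
  have X2 : exp (- dlt N beta eps) * / Zpart h' beta <= / Zpart h beta.
  { apply: (Rmult_le_reg_l (Zpart h beta)) => //. rewrite Rinv_r; last lra.
    apply: (Rmult_le_reg_l (Zpart h' beta)) => //. rewrite Rmult_1_r.
    have -> : Zpart h' beta * (Zpart h beta * (exp (- dlt N beta eps) * / Zpart h' beta)) = Zpart h beta * exp (- dlt N beta eps)
      by field; lra.
    have : Zpart h beta * exp (- dlt N beta eps) <= exp (dlt N beta eps) * Zpart h' beta * exp (- dlt N beta eps).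
    { apply: Rmult_le_compat_r => //; left; apply: exp_pos. }
    have -> : exp (dlt N beta eps) * Zpart h' beta * exp (- dlt N beta eps) = Zpart h' beta.
    { rewrite Rmult_comm -Rmult_assoc -exp_plus. have -> : - dlt N beta eps + dlt N beta eps = 0 by ring. rewrite exp_0; ring. }
    done. }
  have E2 : exp (- (2 * dlt N beta eps)) = exp (- dlt N beta eps) * exp (- dlt N beta eps).
  { rewrite -exp_plus; f_equal; ring. }
  rewrite E2.
  have P1 := exp_pos (- beta * Rmax (Ham h' s) (Ham h' s')). have P2 : 0 < / Zpart h' beta by apply: Rinv_0_lt_compat.
  have P3 := exp_pos (- dlt N beta eps).
  have : exp (- dlt N beta eps) * exp (- dlt N beta eps) * (c * (exp (- beta * Rmax (Ham h' s) (Ham h' s')) * / Zpart h' beta))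
     = c * ((exp (- dlt N beta eps) * exp (- beta * Rmax (Ham h' s) (Ham h' s'))) * (exp (- dlt N beta eps) * / Zpart h' beta)) by ring.
  move=> ->. apply: Rmult_le_compat_l => //. apply: Rmult_le_compat => //; nra.
Qed.

Lemma Dir_cmp f : exp (- (2 * dlt N beta eps)) * Dir h' beta f <= Dir h beta f.
Proof. rewrite /Dir. have -> : forall a b, a * (/ 2 * b) = / 2 * (a * b) by move=> *; ring.
  apply: Rmult_le_compat_l; first lra. rewrite /sumS -sum_scal. apply: sum_le => s. rewrite -sum_scal. apply: sum_le => s'.
  case: (eqVneq s s') => [->|ne]; first (rewrite Rminus_diag; simpl; lra).
  have := cond_ge ne. have := pow2_ge_0 (f s - f s'). move=> H1 H2.
  rewrite -Rmult_assoc. apply: Rmult_le_compat_r => //. Qed.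

End Comp2.

Section Sym.
Variables (N n : nat) (hx : 'I_N -> R) (beta : R) (lab : 'I_N -> 'I_n).
Variable t : 'I_N -> 'I_N.
Hypothesis Ht : involutive t.
Hypothesis Hh : forall k, hx (t k) = hx k.
Hypothesis Hl : forall k, lab (t k) = lab k.
Implicit Types s : config N.

Definition cs s : config N := [ffun k => s (t k)].

Lemma t_inj : injective t. Proof. exact: inv_inj. Qed.
Lemma cs_inv : involutive cs.
Proof. move=> s; apply/ffunP => k; rewrite !ffunE Ht //. Qed.
Lemma cs_inj : injective cs. Proof. exact: inv_inj cs_inv. Qed.

Lemma spin_cs s k : spin (cs s) k = spin s (t k).
Proof. by rewrite /spin ffunE. Qed.

Lemma sumI_t (F : 'I_N -> R) : sumI (fun k => F (t k)) = sumI F.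
Proof. rewrite /sumI. symmetry. exact: sum_reindex t_inj. Qed.

Lemma Ham_cs s : Ham hx (cs s) = Ham hx s.
Proof. rewrite /Ham.
  have -> : sumI (fun i => sumI (fun j => spin (cs s) i * spin (cs s) j)) = sumI (fun i => sumI (fun j => spin s i * spin s j)).
  { transitivity (sumI (fun i => sumI (fun j => spin s (t i) * spin s (t j)))).
    { rewrite /sumI; apply: sum_ext => i; apply: sum_ext => j; by rewrite !spin_cs. }
    rewrite -(sumI_t (fun i => sumI (fun j => spin s i * spin s j))). rewrite /sumI; apply: sum_ext => i.
    exact: (sumI_t (fun j => spin s (t i) * spin s j)). }
  have -> : sumI (fun i => hx i * spin (cs s) i) = sumI (fun i => hx i * spin s i).
  { rewrite -(sumI_t (fun i => hx i * spin s i)). rewrite /sumI; apply: sum_ext => i. by rewrite spin_cs Hh. }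
  done. Qed.

Lemma l1dist_cs s s' : l1dist (cs s) (cs s') = l1dist s s'.
Proof. rewrite /l1dist -(sumI_t (fun i => Rabs (spin s i - spin s' i))). rewrite /sumI; apply: sum_ext => i. by rewrite !spin_cs. Qed.

Lemma rho_cs s : rho lab (cs s) = rho lab s.
Proof. apply: functional_extensionality => l. rewrite /rho. f_equal.
  rewrite -(sumI_t (fun i => (if lab i == l then 1 else 0) * spin s i)). rewrite /sumI; apply: sum_ext => i.
  by rewrite spin_cs Hl. Qed.

Lemma poff_cs s s' : poff hx beta (cs s) (cs s') = poff hx beta s s'.
Proof. by rewrite /poff l1dist_cs !Ham_cs. Qed.

Lemma sumS_cs (F : config N -> R) : sumS (fun s => F (cs s)) = sumS F.
Proof. rewrite /sumS. symmetry. exact: sum_reindex cs_inj. Qed.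

Lemma pker_cs s s' : pker hx beta (cs s) (cs s') = pker hx beta s s'.
Proof. rewrite /pker (inj_eq cs_inj) poff_cs. case: (s == s') => //. f_equal.
  rewrite -(sumS_cs (fun s'' => ind (s'' <> cs s) * poff hx beta (cs s) s'')). rewrite /sumS; apply: sum_ext => s''.
  rewrite poff_cs. f_equal. apply: ind_ext. split => H E; apply: H; [by rewrite E| exact: cs_inj]. Qed.

Variables (A B : config N -> Prop).
Hypothesis HA : forall s, A (cs s) <-> A s.
Hypothesis HB : forall s, B (cs s) <-> B s.

Lemma hitB_cs T s : hitB hx beta A B T (cs s) = hitB hx beta A B T s.
Proof. elim: T s => [|T IH] s //. rewrite !hitB_S.
  rewrite -(sumS_cs (fun s' => pker hx beta (cs s) s' * (ind (B s' /\ ~ A s') + ind (~ A s' /\ ~ B s') * hitB hx beta A B T s'))).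
  rewrite /sumS; apply: sum_ext => s'. rewrite pker_cs IH. f_equal. f_equal; [|f_equal]; apply: ind_ext; rewrite HA HB; tauto. Qed.

Lemma esc_cs s : esc hx beta A B (cs s) = esc hx beta A B s.
Proof. rewrite /esc. f_equal. apply: functional_extensionality => T. exact: hitB_cs. Qed.

End Sym.

Section Red.
Variables (N n : nat) (hx : 'I_N -> R) (beta : R) (lab : 'I_N -> 'I_n).
Hypothesis N0 : (0 < N)%N.
Hypothesis Hblk : forall i j, lab i = lab j -> hx i = hx j.
Variables (A B : config N -> Prop).
Hypothesis HA : forall s s', rho lab s = rho lab s' -> (A s <-> A s').
Hypothesis HB : forall s s', rho lab s = rho lab s' -> (B s <-> B s').
Implicit Types s : config N.

Lemma rho_block s s' (l : 'I_n) : rho lab s = rho lab s' ->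
  sumI (fun k => (if lab k == l then 1 else 0) * spin s k) = sumI (fun k => (if lab k == l then 1 else 0) * spin s' k).
Proof. move=> /(f_equal (fun f => f l)). rewrite /rho => H. apply: (Rmult_eq_reg_l (/ INR N)) => //.
  apply: Rinv_neq_0_compat. have := INR_N_pos N0. lra. Qed.

Lemma partner s s' i : rho lab s = rho lab s' -> s i != s' i ->
  exists j, lab j = lab i /\ s j != s' j /\ s j != s i.
Proof.
  move=> Hr Hi. apply: NNPP => Hn.
  have H0 : sumI (fun k => (if lab k == lab i then 1 else 0) * (spin s k - spin s' k)) = 0.
  { have := rho_block (lab i) Hr. rewrite /sumI => E.
    have -> : \big[Rplus/0]_(k : 'I_N) ((if lab k == lab i then 1 else 0) * (spin s k - spin s' k)) =
       \big[Rplus/0]_(k : 'I_N) ((if lab k == lab i then 1 else 0) * spin s k) - \big[Rplus/0]_(k : 'I_N) ((if lab k == lab i then 1 else 0) * spin s' k)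
      by rewrite -sum_sub; apply: sum_ext => k; ring.
    rewrite E; ring. }
  set c := spin s i.
  have Hc : c * c = 1 by rewrite /c /spin; case: (s i); ring.
  have Ht : forall k, 0 <= c * ((if lab k == lab i then 1 else 0) * (spin s k - spin s' k)).
  { move=> k. case: (eqVneq (lab k) (lab i)) => Lk; last (simpl; lra).
    case: (eqVneq (s k) (s' k)) => Sk.
    - rewrite /spin Sk. have -> : forall a, a - a = 0 by move=> *; ring. simpl; lra.
    - have Ek : s k = s i.
      { apply/eqP; apply: contraT => Nk. exfalso; apply: Hn; exists k; split => //; split => //. }
      have Ek' : s' k = ~~ s i. { move: Sk; rewrite Ek; by case: (s i); case: (s' k). }
      rewrite /c /spin Ek Ek' /=. case: (s i) => /=; lra. }
  have Hi2 : c * ((if lab i == lab i then 1 else 0) * (spin s i - spin s' i)) = 2.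
  { rewrite eqxx /c /spin. move: Hi; case: (s i); case: (s' i) => //= _; ring. }
  have := @sum_ge_term _ (fun k => c * ((if lab k == lab i then 1 else 0) * (spin s k - spin s' k))) i Ht.
  rewrite Hi2 sum_scal. rewrite -/(sumI _) H0. lra.
Qed.

Lemma esc_rho s s' : rho lab s = rho lab s' -> esc hx beta A B s = esc hx beta A B s'.
Proof.
  suff H : forall d s s', (#|[set k | s k != s' k]| <= d)%N -> rho lab s = rho lab s' -> esc hx beta A B s = esc hx beta A B s'.
  { move=> Hr; exact: (H _ s s' (leqnn _) Hr). }
  elim=> [|d IH] {}s {}s' Hd Hr.
  - have -> : s = s'. { apply/ffunP => k. apply/eqP; apply: contraT => Nk.
      have : (0 < #|[set k | s k != s' k]|)%N by apply/card_gt0P; exists k; rewrite inE.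
      move: Hd; rewrite leqn0 => /eqP ->. done. }
    done.
  - case: (pickP (fun k => s k != s' k)) => [i Hi|none]; last first.
    { have -> : s = s' by apply/ffunP => k; apply/eqP; move: (none k) => /= /negbFE. done. }
    case: (partner Hr Hi) => j [Lj [Hj Hji]].
    have Ht : involutive (tperm i j) := tpermK i j.
    have Hh : forall k, hx (tperm i j k) = hx k.
    { move=> k; case: tpermP => [->|->|//]; [exact: Hblk Lj| exact: Hblk (esym Lj)]. }
    have Hl : forall k, lab (tperm i j k) = lab k.
    { move=> k; case: tpermP => [->|->|//]; [exact: Lj| exact: (esym Lj)]. }
    set s2 := cs (tperm i j) s.
    have R2 : rho lab s2 = rho lab s by apply: rho_cs.
    have E2 : esc hx beta A B s2 = esc hx beta A B s.
    { apply: esc_cs => //; move=> x; [apply: HA| apply: HB]; exact: rho_cs. }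
    rewrite -E2. apply: IH; last by rewrite R2.
    have Eb : s j = s' i /\ s i = s' j.
    { move: Hi Hj Hji; case: (s i); case: (s' i); case: (s j); case: (s' j) => //. }
    have P : [set k | s2 k != s' k] \proper [set k | s k != s' k].
    { apply/properP; split.
      - apply/subsetP => k; rewrite !inE /s2 /cs ffunE. case: tpermP => [->|->|//].
        + by rewrite (proj1 Eb) eqxx.
        + by rewrite (proj2 Eb) eqxx.
      - exists i; rewrite !inE //. rewrite /s2 /cs ffunE tpermL (proj1 Eb) eqxx //. }
    rewrite -ltnS. exact: leq_trans (proper_card P) Hd.
Qed.

End Red.

Lemma Rinf_le (E : R -> Prop) v : E v -> (forall w, E w -> 0 <= w) -> Rinf E <= v.
Proof. move=> Ev H. rewrite /Rinf. case: excluded_middle_informative => [X|_]; last exact: H.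
  case: (constructive_indefinite_description _ X) => m [Hm _] /=. exact: Hm. Qed.

Lemma Rinf_ge0 (E : R -> Prop) : (forall w, E w -> 0 <= w) -> 0 <= Rinf E.
Proof. move=> H. rewrite /Rinf. case: excluded_middle_informative => [X|_]; last lra.
  case: (constructive_indefinite_description _ X) => m [_ Hm] /=. apply: Hm => w; exact: H. Qed.

Lemma In_seq (T : eqType) (x : T) (s : seq T) : x \in s -> In x s.
Proof. elim: s => [|y s IH] //=. rewrite in_cons => /orP [/eqP ->|/IH]; tauto. Qed.

Lemma flist_spec (X : Type) (E : X -> Prop) : (exists l, enumerates E l) -> enumerates E (flist E).
Proof. move=> H. rewrite /flist. case: excluded_middle_informative => [X0|//].
  by case: (constructive_indefinite_description _ X0). Qed.

Lemma Gamma_enum N n (lab : 'I_N -> 'I_n) : enumerates (Gamma lab) (flist (Gamma lab)).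
Proof. apply: flist_spec.
  pose dec := fun x y : 'I_n -> R => excluded_middle_informative (x = y).
  exists (nodup dec (map (rho lab) (enum (config N)))). split; first exact: NoDup_nodup.
  move=> x. rewrite nodup_In in_map_iff. split.
  - case=> s [Hs _]; by exists s.
  - case=> s Hs; exists s; split => //. apply: In_seq. by rewrite mem_enum.
Qed.

Lemma lsum_ext (X : Type) (l : list X) F G : (forall x, In x l -> F x = G x) -> lsum l F = lsum l G.
Proof. elim: l => [|a l IH] //= H. rewrite H ?IH //; [move=> x Hx; apply: H| ]; tauto. Qed.

Lemma lsum_sumS (X : Type) N (l : list X) (F : config N -> X -> R) :
  lsum l (fun x => sumS (fun s => F s x)) = sumS (fun s => lsum l (F s)).
Proof. elim: l => [|a l IH] /=. by rewrite /sumS sum_0. rewrite IH /sumS -sum_add //. Qed.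

Lemma lsum_scal (X : Type) (l : list X) c F : lsum l (fun x => c * F x) = c * lsum l F.
Proof. elim: l => [|a l IH] /=; first ring. rewrite IH; ring. Qed.

Lemma lsum_point0 (X : Type) (l : list X) (a : X) G : ~ In a l -> lsum l (fun x => ind (a = x) * G x) = 0.
Proof. elim: l => [|y l IH] //= H. rewrite IH; last tauto. rewrite ind_F; [ring| move=> E; apply: H; left; done]. Qed.

Lemma lsum_point (X : Type) (l : list X) (a : X) G : NoDup l -> In a l -> lsum l (fun x => ind (a = x) * G x) = G a.
Proof. elim: l => [|y l IH] //= ND Hin. inversion ND; subst. case: Hin => [E|Hin].
  - subst. rewrite ind_T // lsum_point0 //. ring.
  - rewrite IH //. rewrite ind_F; [ring| move=> E; subst; tauto].
Qed.

Lemma lsum_point_sum (X : Type) N (l : list X) (f : config N -> X) (G : config N -> X -> R) :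
  NoDup l -> (forall s, In (f s) l) ->
  lsum l (fun x => sumS (fun s => ind (f s = x) * G s x)) = sumS (fun s => G s (f s)).
Proof. move=> ND Hf. rewrite lsum_sumS. rewrite /sumS; apply: sum_ext => s. exact: lsum_point. Qed.

Lemma lsum_max (X : Type) (l : list X) F : l <> nil -> exists x, In x l /\ lsum l F <= INR (length l) * F x.
Proof. elim: l => [|a l IH] // _. case: l IH => [|b l] IH.
  - exists a; split; [left; done| simpl; lra].
  - case: IH => // x [Hx H]. set L := lsum (b :: l) F in H *. set m := length (b :: l) in H *.
    have Hm : 0 <= INR m := pos_INR m.
    have -> : lsum (a :: b :: l) F = F a + L by [].
    have -> : length (a :: b :: l) = S m by []. rewrite S_INR.
    case: (Rle_dec (F x) (F a)) => Hc.
    + exists a; split; first by left. nra.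
    + exists x; split; first by right. nra.
Qed.

Section Lift.
Variables (N n : nat) (h : 'I_N -> R) (beta : R) (lab : 'I_N -> 'I_n).
Hypothesis N0 : (0 < N)%N.
Hypothesis beta0 : 0 <= beta.

Lemma mum_pos x : Gamma lab x -> 0 < mum h beta lab x.
Proof. case=> s Hs. rewrite /mum.
  have := @sum_ge_term _ (fun s' => ind (rho lab s' = x) * mu h beta s') s.
  rewrite ind_T // Rmult_1_l. move=> H. apply: Rlt_le_trans (mu_pos h beta s) (H _).
  move=> s'; apply: Rmult_le_pos; [apply ind_01| left; apply mu_pos]. Qed.

Lemma dirichlet_lift g : dirichlet h beta lab g = Dir h beta (fun s => g (rho lab s)).
Proof.
  have [ND Hin] := Gamma_enum lab. set l := flist (Gamma lab) in ND Hin *.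
  have Hf : forall s, In (rho lab s) l by move=> s; apply/Hin; exists s.
  rewrite /dirichlet /Dir. f_equal.
  have E1 : forall x, In x l -> lsum l (fun y => mum h beta lab x * rm h beta lab x y * (g x - g y) ^ 2) =
     sumS (fun s => ind (rho lab s = x) * sumS (fun s' => mu h beta s * pker h beta s s' * (g x - g (rho lab s')) ^ 2)).
  { move=> x Hx. have Hm := mum_pos (proj1 (Hin x) Hx).
    transitivity (lsum l (fun y => sumS (fun s' => ind (rho lab s' = y) *
          sumS (fun s => ind (rho lab s = x) * mu h beta s * pker h beta s s' * (g x - g y) ^ 2)))).
    { apply: lsum_ext => y _. rewrite /rm -Rmult_assoc Rinv_r; last lra. rewrite Rmult_1_l.
      rewrite /sumS -sum_scalr. transitivity (\big[Rplus/0]_(s : config N) \big[Rplus/0]_(s' : config N)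
         (ind (rho lab s = x) * mu h beta s * (ind (rho lab s' = y) * pker h beta s s') * (g x - g y) ^ 2)).
      { apply: sum_ext => s. rewrite -sum_scal -sum_scalr. apply: sum_ext => s'. done. }
      rewrite sum_exchange. apply: sum_ext => s'. rewrite -sum_scal. apply: sum_ext => s. ring. }
    rewrite (lsum_point_sum (fun s' y => sumS (fun s => ind (rho lab s = x) * mu h beta s * pker h beta s s' * (g x - g y) ^ 2)) ND Hf).
    rewrite /sumS sum_exchange. apply: sum_ext => s. rewrite -sum_scal. apply: sum_ext => s'. ring. }
  rewrite (lsum_ext E1).
  rewrite (lsum_point_sum (fun s x => sumS (fun s' => mu h beta s * pker h beta s s' * (g x - g (rho lab s')) ^ 2)) ND Hf).
  done.
Qed.

Lemma muSet_split (A : config N -> Prop) : muSet h beta A =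
  lsum (flist (Gamma lab)) (fun x => sumS (fun s => ind (rho lab s = x) * (ind (A s) * mu h beta s))).
Proof. have [ND Hin] := Gamma_enum lab. rewrite (lsum_point_sum (fun s _ => ind (A s) * mu h beta s) ND) //.
  move=> s; apply/Hin; by exists s. Qed.

End Lift.

Lemma esc_anti N (h : 'I_N -> R) beta (N0 : (0 < N)%N) (beta0 : 0 <= beta) (A A' B : config N -> Prop) :
  (forall s, A' s -> A s) -> (forall s, A s -> ~ B s) -> forall s,
  esc h beta A B s <= esc h beta A' B s.
Proof. move=> sub AB s. apply: (Rle_cv_lim _ (@esc_cv N h beta N0 beta0 A B s) (@esc_cv N h beta N0 beta0 A' B s)).
  move=> T; exact: (@hitB_anti N h beta N0 beta0 A A' B sub AB). Qed.

Lemma muSet_le N (h h' : 'I_N -> R) beta eps (beta0 : 0 <= beta) (hh : forall i, Rabs (h i - h' i) <= eps) (A : config N -> Prop) :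
  muSet h beta A <= exp (2 * dlt N beta eps) * muSet h' beta A.
Proof. rewrite /muSet /sumS -sum_scal. apply: sum_le => s. have := @mu_le N h h' beta eps beta0 hh s.
  have := ind_01 (A s). move=> [H1 H2] H. rewrite -Rmult_assoc (Rmult_comm _ (ind _)) Rmult_assoc.
  apply: Rmult_le_compat_l => //. Qed.

Lemma muSet_pos N (h : 'I_N -> R) beta (A : config N -> Prop) s : A s -> 0 < muSet h beta A.
Proof. move=> Hs. rewrite /muSet. have := @sum_ge_term _ (fun s' => ind (A s') * mu h beta s') s.
  rewrite ind_T // Rmult_1_l. move=> H. apply: Rlt_le_trans (mu_pos h beta s) (H _).
  move=> s'; apply: Rmult_le_pos; [apply ind_01| left; apply mu_pos]. Qed.

Unset Implicit Arguments.
Theorem mainTheorem18 (N n : nat) (h : 'I_N -> R) (hinf beta : R)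
    (I : 'I_n -> R -> Prop) (lab : 'I_N -> 'I_n)
    (Bm : ('I_n -> R) -> Prop) (A : config N -> Prop) :
  (forall i, Rabs (h i) <= hinf) ->
  0 <= beta ->
  (1 <= n)%coq_nat -> (n <= N)%coq_nat ->
  (forall l x y z, I l x -> I l y -> x <= z <= y -> I l z) ->
  (forall l x y, I l x -> I l y -> Rabs (x - y) <= 2 * hinf / INR n) ->
  (forall l l' x, I l x -> I l' x -> l = l') ->
  (forall x, (exists l, I l x) <-> -hinf <= x <= hinf) ->
  (forall i, I (lab i) (h i)) ->
  (exists x, Bm x) -> (forall x, Bm x -> Gamma lab x) ->
  (exists s, A s) -> (forall s, A s -> ~ Bm (rho lab s)) ->
  hitprob h beta A (fun s => Bm (rho lab s)) >=
    / INR (card_setR (Gamma lab)) *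
    exp (- 4 * beta * (2 * hinf / INR n) * (2 * INR N + 1)) *
    Rinf (fun v => exists x, Gamma lab x /\ ~ Bm x /\
            v = mcap h beta lab (fun y => y = x) Bm / mum h beta lab x).
Proof.
  move=> Hhinf beta0 n1 nN _ Hlen _ _ Hlab _ _ [s0 As0] HAB.
  have N0 : (0 < N)%N by apply/ltP; lia.
  set eps := 2 * hinf / INR n.
  set B := fun s => Bm (rho lab s).
  have AB : forall s, A s -> ~ B s by move=> s /HAB.
  set ht := fun i => h (odflt i [pick j | lab j == lab i]).
  have Hblk : forall i j, lab i = lab j -> ht i = ht j.
  { move=> i j E. rewrite /ht. have -> : [pick k | lab k == lab i] = [pick k | lab k == lab j].
    { apply: eq_pick => k /=; by rewrite E. }
    case: pickP => [k Hk|Hn] //=. move: (Hn j); by rewrite /= eqxx. }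
  have hh : forall i, Rabs (h i - ht i) <= eps.
  { move=> i. rewrite /ht. case: pickP => [k /eqP Hk|_] /=.
    - apply: (Hlen (lab i)); [exact: Hlab| rewrite -Hk; exact: Hlab].
    - exact: Hlen (Hlab i) (Hlab i). }
  have hh' : forall i, Rabs (ht i - h i) <= eps by move=> i; apply: Rabs_sym_le.
  have eps0 : 0 <= eps.
  { have := hh (Ordinal N0). have := Rabs_pos (h (Ordinal N0) - ht (Ordinal N0)). lra. }
  set d := dlt N beta eps.
  have d0 : 0 <= d.
  { rewrite /d /dlt. apply: Rmult_le_pos => //. apply: Rmult_le_pos => //. apply: pos_INR. }
  set l := flist (Gamma lab).
  have [ND Hin] := Gamma_enum lab. rewrite -/l in ND Hin.
  have Hl : l <> nil. { move=> E. have : In (rho lab s0) l by apply/Hin; exists s0. by rewrite E. }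
  set mA := fun x => sumS (fun s => ind (rho lab s = x) * (ind (A s) * mu h beta s)).
  have [x [Hx HxM]] := lsum_max mA Hl. rewrite -(muSet_split h beta lab A) in HxM.
  have HmA := muSet_pos h beta As0.
  set Ax := fun s => A s /\ rho lab s = x.
  have mAx : mA x = muSet h beta Ax.
  { rewrite /mA /muSet /sumS; apply: sum_ext => s. rewrite /Ax.
    case: (classic (A s)) => Ha; case: (classic (rho lab s = x)) => Hr.
    - rewrite (ind_T (P := A s)) // (ind_T (P := rho lab s = x)) // (ind_T (P := A s /\ _)) //. ring.
    - rewrite (ind_F (P := rho lab s = x)) // (ind_F (P := A s /\ _)); [ring|tauto].
    - rewrite (ind_F (P := A s)) // (ind_F (P := A s /\ _)); [ring|tauto].
    - rewrite (ind_F (P := A s)) // (ind_F (P := A s /\ _)); [ring|tauto]. }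
  have [s1 [As1 Rs1]] : exists s1, A s1 /\ rho lab s1 = x.
  { apply: NNPP => Hn. have : muSet h beta Ax = 0.
    { rewrite /muSet /sumS big1 // => s _. rewrite ind_F; first ring. move=> [H1 H2]; apply: Hn; by exists s. }
    move=> E. rewrite mAx E Rmult_0_r in HxM. lra. }
  set F := fun s => rho lab s = x.
  have FB : forall s, F s -> ~ B s by move=> s Fs; rewrite /B Fs -Rs1; exact: HAB.
  have AxB : forall s, Ax s -> ~ B s by move=> s [Ha _]; exact: AB.
  have S2 : capc h beta Ax B <= capc h beta A B.
  { apply: capc_min => //. move=> s [Ha _]; exact: vpot_A. move=> s; exact: vpot_B. }
  have S3 : exp (- (2 * d)) * capc ht beta Ax B <= capc h beta Ax B.
  { apply: Rle_trans (@Dir_cmp N h ht beta eps N0 beta0 hh (vpot h beta Ax B)).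
    apply: Rmult_le_compat_l; first (left; apply: exp_pos).
    apply: capc_min => //. move=> s Hs; exact: vpot_A. move=> s; exact: vpot_B. }
  have HFr : forall s s', rho lab s = rho lab s' -> (F s <-> F s') by move=> s s' E; rewrite /F E.
  have HBr : forall s s', rho lab s = rho lab s' -> (B s <-> B s') by move=> s s' E; rewrite /B E.
  set Lt := esc ht beta F B s1.
  have HLt : forall s, F s -> esc ht beta F B s = Lt.
  { move=> s Fs. apply: (@esc_rho N n ht beta lab N0 Hblk F B HFr HBr). by rewrite Fs. }
  have S4 : muSet ht beta Ax * Lt <= capc ht beta Ax B.
  { rewrite capc_eq // /muSet /sumS -sum_scalr. apply: sum_le => s.
    case: (classic (Ax s)) => Hs; last (rewrite ind_F //; lra).
    rewrite ind_T //. rewrite -(HLt s (proj2 Hs)). have := mu_pos ht beta s.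
    have := @esc_anti N ht beta N0 beta0 F Ax B (fun s H => proj2 H) FB s. nra. }
  have S5 : capc ht beta F B = muSet ht beta F * Lt.
  { rewrite capc_eq // /muSet /sumS -sum_scalr. apply: sum_ext => s.
    case: (classic (F s)) => Hs; last (rewrite ind_F //; ring). rewrite ind_T // HLt //. }
  set psi := vpot ht beta F B.
  have psi_r : forall s s', rho lab s = rho lab s' -> psi s = psi s'.
  { move=> s s' E. rewrite /psi /vpot /uf (@esc_rho N n ht beta lab N0 Hblk F B HFr HBr s s' E).
    rewrite (ind_ext (P := B s /\ ~ F s) (Q := B s' /\ ~ F s')); last by rewrite (HFr _ _ E) (HBr _ _ E).
    rewrite (ind_ext (P := ~ F s /\ ~ B s) (Q := ~ F s' /\ ~ B s')) //; by rewrite (HFr _ _ E) (HBr _ _ E). }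
  set g := fun y : 'I_n -> R => match excluded_middle_informative (exists s, rho lab s = y) with
                    | left H => psi (proj1_sig (constructive_indefinite_description _ H)) | right _ => 0 end.
  have g_r : forall s, g (rho lab s) = psi s.
  { move=> s. rewrite /g. case: excluded_middle_informative => [H|H]; last by (exfalso; apply: H; exists s).
    case: (constructive_indefinite_description _ H) => s' Hs' /=. exact: psi_r. }
  have Dnn : forall g', 0 <= dirichlet h beta lab g'.
  { move=> g'; rewrite dirichlet_lift; exact: Dir_ge0. }
  have S6 : mcap h beta lab (fun y => y = x) Bm <= Dir h beta psi.
  { have -> : Dir h beta psi = dirichlet h beta lab g.
    { rewrite dirichlet_lift. f_equal. apply: functional_extensionality => s. by rewrite g_r. }
    apply: Rinf_le; last by move=> w [g' [_ [_ [_ ->]]]].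
    exists g; split; [|split; [|split]] => //.
    - move=> y [s <-]. rewrite g_r. exact: vpot_01.
    - move=> y [s <-] E. rewrite g_r. apply: vpot_A. exact: E.
    - move=> y [s <-] Hb. rewrite g_r. apply: vpot_B => //. }
  have S6' : Dir h beta psi <= exp (2 * d) * capc ht beta F B.
  { have := @Dir_cmp N ht h beta eps N0 beta0 hh' psi. rewrite /capc -/psi. move=> H.
    have E : exp (2 * d) * exp (- (2 * d)) = 1 by rewrite -exp_plus Rplus_opp_r exp_0.
    have := Rmult_le_compat_l (exp (2 * d)) _ _ (Rlt_le _ _ (exp_pos _)) H. rewrite -Rmult_assoc E Rmult_1_l. done. }
  have M1 : muSet h beta Ax <= exp (2 * d) * muSet ht beta Ax := muSet_le beta0 hh Ax.
  have M2 : muSet ht beta F <= exp (2 * d) * muSet h beta F := muSet_le beta0 hh' F.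
  have MF : mum h beta lab x = muSet h beta F by [].
  have Gx : Gamma lab x by exists s1.
  have MFp : 0 < muSet h beta F by rewrite -MF; exact: mum_pos.
  have MtFp : 0 < muSet ht beta F := muSet_pos ht beta (Rs1 : F s1).
  have MAxp : 0 < muSet h beta Ax := muSet_pos h beta (conj As1 Rs1 : Ax s1).
  have Lt0 : 0 <= Lt by case: (esc_01 ht N0 beta0 F B s1).
  set mc := mcap h beta lab (fun y => y = x) Bm.
  have mc0 : 0 <= mc.
  { apply: Rinf_ge0. move=> w [g' [_ [_ [_ ->]]]]. exact: Dnn. }
  set K := exp (- (2 * d)).
  have EK : exp (2 * d) * K = 1 by rewrite /K -exp_plus Rplus_opp_r exp_0.
  have Kp : 0 < K by apply: exp_pos.
  have EKm : forall m, K * (exp (2 * d) * m) = m.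
  { move=> m. rewrite -Rmult_assoc (Rmult_comm K) EK Rmult_1_l //. }
  have E2p : 0 < exp (2 * d) by apply: exp_pos.
  have Lpos : 0 < INR (length l).
  { apply: lt_0_INR. move: Hx. case: (l) => //= *; lia. }
  rewrite mAx in HxM.
  have C1 : K * (muSet ht beta Ax * Lt) <= capc h beta A B.
  { apply: Rle_trans S2. apply: Rle_trans S3. apply: Rmult_le_compat_l; [lra|exact: S4]. }
  have C2 : mc <= exp (2 * d) * (muSet ht beta F * Lt).
  { rewrite -S5. exact: Rle_trans S6 S6'. }
  have C3 : K * muSet h beta Ax <= muSet ht beta Ax.
  { have := Rmult_le_compat_l K _ _ (Rlt_le _ _ Kp) M1. rewrite EKm. done. }
  have C4 : K * muSet ht beta F <= muSet h beta F.
  { have := Rmult_le_compat_l K _ _ (Rlt_le _ _ Kp) M2. rewrite EKm. done. }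
  have C5 : K * K * K * K * muSet h beta Ax * mc <= capc h beta A B * muSet h beta F.
  {
    have C2' : K * mc <= muSet ht beta F * Lt.
    { have := Rmult_le_compat_l K _ _ (Rlt_le _ _ Kp) C2. rewrite EKm. done. }
    have T1 : K * K * K * K * muSet h beta Ax * mc <= K * K * muSet ht beta Ax * (K * mc).
    { have : 0 <= K * K * mc by apply: Rmult_le_pos => //; nra.
      move=> H. have := Rmult_le_compat_l (K * K * mc) _ _ H C3. move=> H2. nra. }
    have T2 : K * K * muSet ht beta Ax * (K * mc) <= K * K * muSet ht beta Ax * (muSet ht beta F * Lt).
    { apply: Rmult_le_compat_l => //. have := Rlt_le _ _ (muSet_pos ht beta (conj As1 Rs1 : Ax s1)). nra. }
    have T3 : K * K * muSet ht beta Ax * (muSet ht beta F * Lt) = K * (muSet ht beta Ax * Lt) * (K * muSet ht beta F) by ring.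
    have T4 : K * (muSet ht beta Ax * Lt) * (K * muSet ht beta F) <= capc h beta A B * muSet h beta F.
    { have := Rlt_le _ _ (muSet_pos ht beta (conj As1 Rs1 : Ax s1)) => Hm.
      apply: Rmult_le_compat; [| | exact: C1| exact: C4].
      - apply: Rmult_le_pos; [lra| exact: Rmult_le_pos].
      - apply: Rmult_le_pos; lra. }
    lra. }
  rewrite (hitprob_eq N0 beta0 AB HmA).
  set v := mc / mum h beta lab x.
  have Hv : Rinf (fun v => exists x, Gamma lab x /\ ~ Bm x /\ v = mcap h beta lab (fun y => y = x) Bm / mum h beta lab x) <= v.
  { apply: Rinf_le.
    - exists x; split => //; split => //. rewrite -Rs1; exact: HAB.
    - move=> w [y [Gy [_ ->]]]. apply: Rmult_le_pos.
      + apply: Rinf_ge0. move=> w' [g' [_ [_ [_ ->]]]]. exact: Dnn.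
      + left; apply: Rinv_0_lt_compat; exact: mum_pos. }
  have Hr0 : 0 <= Rinf (fun v => exists x, Gamma lab x /\ ~ Bm x /\ v = mcap h beta lab (fun y => y = x) Bm / mum h beta lab x).
  { apply: Rinf_ge0. move=> w [y [Gy [_ ->]]]. apply: Rmult_le_pos.
    + apply: Rinf_ge0. move=> w' [g' [_ [_ [_ ->]]]]. exact: Dnn.
    + left; apply: Rinv_0_lt_compat; exact: mum_pos. }
  have Hexp : exp (- 4 * beta * eps * (2 * INR N + 1)) <= K * K * K * K.
  { rewrite /K -!exp_plus. apply: exp_le'. rewrite /d /dlt. have : 0 <= beta * eps by apply: Rmult_le_pos. nra. }
  rewrite /card_setR -/l.
  set R0 := Rinf _ in Hv Hr0 *.
  have Ex0 : 0 < exp (- 4 * beta * eps * (2 * INR N + 1)) by apply: exp_pos.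
  apply: Rle_ge.
  have V : v = mc / muSet h beta F by rewrite /v MF.
  apply: Rle_trans (_ : / INR (length l) * (K * K * K * K) * v <= _).
  { apply: Rmult_le_compat; try (apply: Rmult_le_pos); try lra.
    - left; apply: Rinv_0_lt_compat; lra.
    - apply: Rmult_le_compat_l => //. left; apply: Rinv_0_lt_compat; lra. }
  rewrite V. apply: (Rmult_le_reg_r (muSet h beta A)) => //.
  have -> : capc h beta A B / muSet h beta A * muSet h beta A = capc h beta A B by field; lra.
  apply: (Rmult_le_reg_r (muSet h beta F)) => //.
  have -> : / INR (length l) * (K * K * K * K) * (mc / muSet h beta F) * muSet h beta A * muSet h beta F
     = (K * K * K * K * mc) * (muSet h beta A / INR (length l)).
  { field; lra. }
  have Hq : muSet h beta A / INR (length l) <= muSet h beta Ax.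
  { apply: (Rmult_le_reg_r (INR (length l))) => //. have -> : muSet h beta A / INR (length l) * INR (length l) = muSet h beta A by field; lra.
    lra. }
  have HK4 : 0 <= K * K * K * K * mc.
  { apply: Rmult_le_pos => //. have : 0 < K * K by nra. nra. }
  apply: Rle_trans C5.
  have -> : K * K * K * K * muSet h beta Ax * mc = K * K * K * K * mc * muSet h beta Ax by ring.
  apply: Rmult_le_compat_l => //.
Qed.
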